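(* Let $n$ be a positive integer and $w_1\le\dots\le w_m$ a feasible partition of $n$ with partial sums $R_i=w_1+\dots+w_i$, $R_0=0$. Then for every $1\le i\le m$, $R_{i-1} \ge \frac{w_i-1}{2}$.
   Context: A weighing partition of a positive integer $n$ is a multiset of positive integers summing to $n$ such that every integer $\ell$ with $1\le\ell\le n$ is a sum $\sum_j u_jw_j$ with $u_j\in\{-1,0,1\}$. A feasible partition of $n$ is a weighing partition of $n$ whose number of parts $m$ is minimal among all weighing partitions of $n$, written $w_1\le\dots\le w_m$. *)

(* Defs.v *)
From mathcomp Require Import all_boot all_order all_algebra.
Set Implicit Arguments. Unset Strict Implicit. Unset Printing Implicit Defensive.
Import Order.TTheory GRing.Theory Num.Theory.

(* A multiset of positive integers is represented by a sequence s : seq nat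
   (order irrelevant for the definitions below). *)

Definition signed_representable (s : seq nat) (l : nat) : Prop :=
  exists u : seq int,
    size u = size s /\
    all (fun c : int => c \in [:: (-1)%R; 0%R; 1%R]) u /\
    (\sum_(j < size s) nth 0%R u j * Posz (nth 0%N s j))%R = Posz l.

Definition weighing_partition (n : nat) (s : seq nat) : Prop :=
  all (fun x => 0 < x)%N s /\ sumn s = n /\
  forall l, (1 <= l <= n)%N -> signed_representable s l.

Definition feasible_partition (n : nat) (s : seq nat) : Prop :=
  weighing_partition n s /\
  forall t, weighing_partition n t -> (size s <= size t)%N.

(* Main.v *)
Require Import Defs.
From mathcomp Require Import all_boot all_order all_algebra zify.
Import Order.TTheory GRing.Theory Num.Theory.

Lemma sum_take_int (s : seq nat) (k : nat) :
  (\sum_(j < size s) (if (j < k)%N then (nth 0%N s j)%:Z else 0) = (sumn (take k s))%:Z)%R.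
Proof.
elim: s k => [|x s IH] k /=; first by rewrite big_ord0.
rewrite big_ord_recl /=; case: k => [|k] /=.
  by rewrite ?take0 big1 ?addr0.
rewrite -[RHS]/(Posz (x + sumn (take k s))) PoszD -IH; congr (_ + _)%R.
Qed.

Lemma sum_all_int (s : seq nat) :
  (\sum_(j < size s) (nth 0%N s j)%:Z = (sumn s)%:Z)%R.
Proof.
rewrite -(take_size s) -(sum_take_int s (size s)) take_size.
by apply: eq_bigr => j _; rewrite ltn_ord.
Qed.

Theorem mainTheorem3 (n : nat) (w : seq nat) :
  (0 < n)%N -> feasible_partition n w -> sorted leq w ->
  forall i : nat, (1 <= i <= size w)%N ->
    ((((nth 0%N w i.-1)%:R : rat) - 1) / 2 <= ((sumn (take i.-1 w))%:R : rat))%R.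
Proof.
move=> _ [[_ [Hn Hrep]] _] Hsort i /andP [Hi1 Him].
set k := i.-1; set R := sumn (take k w).
have Hk : (k < size w)%N by rewrite /k; move: Hi1 Him; clear; case: i.
rewrite ler_pdivrMr // leNgt; apply/negP => Hlt.
have Hbig : (2 * R + 2 <= nth 0%N w k)%N.
  have : ((R * 2 + 1)%:R < (nth 0%N w k)%:R :> rat)%R.
    by rewrite natrD natrM addrC -ltrBrDl.
  rewrite ltr_nat; lia.
have HRn : (R + nth 0%N w k <= n)%N.
  have E : sumn w = (R + sumn (drop k w))%N by rewrite /R -sumn_cat cat_take_drop.
  rewrite -Hn E (drop_nth 0%N Hk) /=; lia.
have [u [Hsz [Hall Hsum]]] := Hrep (n - (2 * R + 1))%N (ltac:(apply/andP; split; lia)).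
set f := fun j : 'I_(size w) => ((nth 0%N w j)%:Z - nth 0%R u j * (nth 0%N w j)%:Z)%R.
have Hf : (\sum_j f j = (2 * R + 1)%:Z)%R.
  rewrite /f sumrB sum_all_int Hsum Hn subzn; last lia.
  by congr Posz; lia.
have uP : forall j : 'I_(size w), nth 0%R u j \in [:: (-1)%R; 0%R; 1%R].
  by move=> j; apply: (all_nthP 0%R Hall); rewrite Hsz.
have f0 : forall j, (0 <= f j)%R.
  move=> j; rewrite /f subr_ge0; have := uP j; rewrite !inE.
  by case/or3P => /eqP ->; rewrite ?mul1r ?mul0r ?mulN1r //; lia.
case: (boolP [exists j : 'I_(size w), (k <= j)%N && (nth 0%R u j != 1%R)]).
  case/existsP => j /andP [Hkj Hu].
  have Hfj : ((nth 0%N w j)%:Z <= f j)%R.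
    rewrite /f; move: (uP j) Hu; rewrite !inE.
    by case/or3P => /eqP -> //; rewrite ?mul0r ?mulN1r ?subr0 // opprK lerDl.
  have Hwj : (nth 0%N w k <= nth 0%N w j)%N.
    by apply: (sorted_leq_nth leq_trans leqnn) => //; rewrite inE.
  have : (f j <= \sum_j f j)%R.
    by rewrite (bigD1 j) //= lerDl sumr_ge0.
  rewrite Hf => H; have := le_trans Hfj H; rewrite lez_nat; lia.
rewrite negb_exists => /forallP Hall1.
have : (\sum_j f j <= \sum_(j < size w) (2 * (if (j < k)%N then (nth 0%N w j)%:Z else 0)))%R.
  apply: ler_sum => j _; case: ifP => Hjk.
    rewrite /f; have := uP j; rewrite !inE.
    by case/or3P => /eqP ->; rewrite ?mul0r ?mulN1r ?mul1r; lia.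
  have := Hall1 j; rewrite leqNgt Hjk /= negbK => /eqP Hu.
  by rewrite /f Hu mul1r subrr mulr0.
rewrite -mulr_sumr sum_take_int Hf -/R; lia.
Qed.
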